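(* Let $k\ge 2$, $w=2^k-1$, $v=2^{k-1}$. Consider a line of $w$ cells indexed $0,\dots,w-1$, all empty except the middle cell $v-1$, on which the frog stands. For $j\ge1$ let $\tilde U_j$ be the sequence of jump lengths consisting of $2^j-1$ jumps of length $1$ followed by one jump of length $2^j+2^{j-1}-1$. Consider the fixed sequence $\tilde U_{k-1},\tilde U_{k-2},\dots,\tilde U_2,\tilde U_1$. Then every valid execution of this sequence visits every cell of the line exactly once and ends on a cell with even index, and for every even index $p\in\{0,2,\dots,w-1\}$ there is a valid execution ending on cell $p$.
   Context: A frog on a line of cells performs a given sequence of positive jump lengths; for each jump it chooses a direction, moving from position $q$ to $q+J$ or $q-J$. An execution is valid if every landing cell lies on the line, is not blocked, and has not been visited before (the starting cell counts as visited). Cells are indexed from $0$. *)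

(* Defs.v *)
From Stdlib Require Import ZArith List Arith.
Import ListNotations.
Open Scope Z_scope.

Definition Utilde (j : nat) : list nat :=
  repeat 1%nat (2 ^ j - 1)%nat ++ [ (2 ^ j + 2 ^ (j - 1) - 1)%nat ].

Definition frog_jumps (k : nat) : list nat :=
  flat_map Utilde (rev (seq 1 (k - 1))).

Fixpoint landings (q : Z) (J : list nat) (ds : list bool) : list Z :=
  match J, ds with
  | j :: J', d :: ds' =>
      let q' := if d then q + Z.of_nat j else q - Z.of_nat j in
      q' :: landings q' J' ds'
  | _, _ => []
  end.

Definition visited (q : Z) (J : list nat) (ds : list bool) : list Z :=
  q :: landings q J ds.

Definition final_cell (q : Z) (J : list nat) (ds : list bool) : Z :=
  last (visited q J ds) q.

Definition valid_exec (w : Z) (blocked : Z -> Prop) (q : Z)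
    (J : list nat) (ds : list bool) : Prop :=
  length ds = length J /\
  (forall c, In c (landings q J ds) -> 0 <= c < w /\ ~ blocked c) /\
  NoDup (visited q J ds).

(* Main.v *)
Require Import Defs.
From Stdlib Require Import ZArith List Arith Lia.
Import ListNotations.
Open Scope Z_scope.

Definition step (q : Z) (j : nat) (d : bool) : Z :=
  if d then q + Z.of_nat j else q - Z.of_nat j.

Fixpoint V (E : Z -> Prop) (q : Z) (J : list nat) (ds : list bool) : Prop :=
  match J, ds with
  | [], [] => True
  | j :: J', d :: ds' =>
      E (step q j d) /\ V (fun c => E c /\ c <> step q j d) (step q j d) J' ds'
  | _, _ => False
  end.

Fixpoint fin (q : Z) (J : list nat) (ds : list bool) : Z :=
  match J, ds with
  | j :: J', d :: ds' => fin (step q j d) J' ds'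
  | _, _ => q
  end.

Lemma V_ext : forall J ds E E' q, (forall c, E c <-> E' c) -> V E q J ds -> V E' q J ds.
Proof.
  induction J as [|j J IH]; intros [|d ds] E E' q H; simpl; auto.
  intros [H1 H2]. split. apply H; auto.
  eapply IH; [|exact H2]. intros c; simpl. rewrite H. tauto.
Qed.

Lemma V_char : forall J ds E q, V E q J ds <->
  (length ds = length J /\ (forall c, In c (landings q J ds) -> E c) /\ NoDup (landings q J ds)).
Proof.
  induction J as [|j J IH]; intros [|d ds] E q; simpl.
  - split; auto. intros _; repeat split; auto. intros c []. constructor.
  - split; [tauto|]. intros [H _]; discriminate.
  - split; [tauto|]. intros [H _]; discriminate.
  - rewrite IH. fold (step q j d). split.
    + intros [H1 [H2 [H3 H4]]]. split; [lia|]. split.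
      * intros c [<-|Hc]; auto. apply H3; auto.
      * constructor; auto. intros Hin. apply H3 in Hin. tauto.
    + intros [H1 [H2 H3]]. inversion H3; subst. split; auto. split; [lia|]. split; auto.
      intros c Hc. split; auto. intros ->. auto.
Qed.

Lemma last_indep : forall (l : list Z) x d d', last (x :: l) d = last (x :: l) d'.
Proof. induction l as [|y l IH]; intros x d d'; [reflexivity|]. change (last (y::l) d = last (y::l) d'). apply IH. Qed.

Lemma fin_final : forall J ds q, fin q J ds = final_cell q J ds.
Proof.
  unfold final_cell, visited.
  induction J as [|j J IH]; intros [|d ds] q; simpl; auto.
  rewrite IH. fold (step q j d). apply last_indep.
Qed.

Lemma walkR : forall m E q rest ds, ~ E q -> ~ E (q - 1) ->
  V E q (repeat 1%nat m ++ rest) ds ->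
  exists ds', ds = repeat true m ++ ds' /\
    V (fun c => E c /\ ~ (q < c <= q + Z.of_nat m)) (q + Z.of_nat m) rest ds'.
Proof.
  induction m as [|m IH]; intros E q rest ds H0 H1 HV.
  - exists ds. split; auto. simpl in *. eapply V_ext; [|rewrite Z.add_0_r; exact HV].
    intros c; simpl. split; [intros; split; auto; lia| tauto].
  - destruct ds as [|d ds]; [destruct rest; simpl in HV; contradiction|].
    simpl in HV. destruct HV as [HE HV]. destruct d; unfold step in *; change (Z.of_nat 1) with 1 in *.
    2:{ contradiction. }
    apply IH in HV; [| tauto | replace (q+1-1) with q by ring; tauto].
    destruct HV as [ds' [-> HV]]. exists ds'. split; auto.
    replace (q + Z.of_nat (S m)) with (q + 1 + Z.of_nat m) by lia.
    eapply V_ext; [|exact HV]. intros c; simpl. split; intros; intuition lia.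
Qed.

Lemma walkL : forall m E q rest ds, ~ E q -> ~ E (q + 1) ->
  V E q (repeat 1%nat m ++ rest) ds ->
  exists ds', ds = repeat false m ++ ds' /\
    V (fun c => E c /\ ~ (q - Z.of_nat m <= c < q)) (q - Z.of_nat m) rest ds'.
Proof.
  induction m as [|m IH]; intros E q rest ds H0 H1 HV.
  - exists ds. split; auto. simpl in *. eapply V_ext; [|rewrite Z.sub_0_r; exact HV].
    intros c; simpl. split; [intros; split; auto; lia| tauto].
  - destruct ds as [|d ds]; [destruct rest; simpl in HV; contradiction|].
    simpl in HV. destruct HV as [HE HV]. destruct d; unfold step in *; change (Z.of_nat 1) with 1 in *.
    { contradiction. }
    apply IH in HV; [| tauto | replace (q-1+1) with q by ring; tauto].
    destruct HV as [ds' [-> HV]]. exists ds'. split; auto.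
    replace (q - Z.of_nat (S m)) with (q - 1 - Z.of_nat m) by lia.
    eapply V_ext; [|exact HV]. intros c; simpl. split; intros; intuition lia.
Qed.

Lemma walkR_back : forall m E q rest ds',
  (forall i, 0 < i <= Z.of_nat m -> E (q + i)) ->
  V (fun c => E c /\ ~ (q < c <= q + Z.of_nat m)) (q + Z.of_nat m) rest ds' ->
  V E q (repeat 1%nat m ++ rest) (repeat true m ++ ds').
Proof.
  induction m as [|m IH]; intros E q rest ds' H0 HV.
  - simpl in *. eapply V_ext; [|rewrite Z.add_0_r in HV; exact HV].
    intros c; simpl. split; [tauto| intros; split; auto; lia].
  - simpl. unfold step; change (Z.of_nat 1) with 1. split. apply H0; lia.
    apply IH. intros i Hi. split. replace (q+1+i) with (q+(i+1)) by ring. apply H0; lia. lia.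
    replace (q + 1 + Z.of_nat m) with (q + Z.of_nat (S m)) by lia.
    eapply V_ext; [|exact HV]. intros c; simpl. split; intros; intuition lia.
Qed.

Lemma walkL_back : forall m E q rest ds',
  (forall i, 0 < i <= Z.of_nat m -> E (q - i)) ->
  V (fun c => E c /\ ~ (q - Z.of_nat m <= c < q)) (q - Z.of_nat m) rest ds' ->
  V E q (repeat 1%nat m ++ rest) (repeat false m ++ ds').
Proof.
  induction m as [|m IH]; intros E q rest ds' H0 HV.
  - simpl in *. eapply V_ext; [|rewrite Z.sub_0_r in HV; exact HV].
    intros c; simpl. split; [tauto| intros; split; auto; lia].
  - simpl. unfold step; change (Z.of_nat 1) with 1. split. apply H0; lia.
    apply IH. intros i Hi. split. replace (q-1-i) with (q - (i+1)) by ring. apply H0; lia. lia.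
    replace (q - 1 - Z.of_nat m) with (q - Z.of_nat (S m)) by lia.
    eapply V_ext; [|exact HV]. intros c; simpl. split; intros; intuition lia.
Qed.

Lemma fin_walk : forall m b q rest ds',
  fin q (repeat 1%nat m ++ rest) (repeat b m ++ ds') =
  fin (if b then q + Z.of_nat m else q - Z.of_nat m) rest ds'.
Proof.
  induction m as [|m IH]; intros b q rest ds'.
  - simpl. destruct b; f_equal; lia.
  - simpl. rewrite IH. unfold step. change (Z.of_nat 1) with 1. destruct b; f_equal; lia.
Qed.

Lemma fj_succ : forall m, frog_jumps (S (S m)) = Utilde (S m) ++ frog_jumps (S m).
Proof.
  intros m. unfold frog_jumps. simpl (S (S m) - 1)%nat. simpl (S m - 1)%nat.
  rewrite Nat.sub_0_r. rewrite seq_S, rev_app_distr. simpl. rewrite ?app_nil_r. reflexivity.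
Qed.

Lemma pow_pos2 : forall m, (1 <= 2 ^ m)%nat.
Proof. induction m; simpl; lia. Qed.

Lemma main : forall m a,
  (forall ds, V (fun c => a <= c < a + Z.of_nat (2^(S m)) - 1 /\ c <> a + Z.of_nat (2^m) - 1)
                (a + Z.of_nat (2^m) - 1) (frog_jumps (S m)) ds ->
     Z.even (fin (a + Z.of_nat (2^m) - 1) (frog_jumps (S m)) ds - a) = true) /\
  (forall p, 0 <= p < Z.of_nat (2^(S m)) - 1 -> Z.even p = true ->
     exists ds, V (fun c => a <= c < a + Z.of_nat (2^(S m)) - 1 /\ c <> a + Z.of_nat (2^m) - 1)
                (a + Z.of_nat (2^m) - 1) (frog_jumps (S m)) ds /\
       fin (a + Z.of_nat (2^m) - 1) (frog_jumps (S m)) ds = a + p).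
Proof.
  induction m as [|m IH]; intros a.
  - change (frog_jumps 1) with (@nil nat). simpl. split.
    + intros [|d ds] _; [|destruct d]; replace (a+1-1-a) with 0 by ring; reflexivity.
    + intros p Hp _. exists []. split; auto. lia.
  - rewrite fj_succ. unfold Utilde. simpl (S m - 1)%nat. rewrite Nat.sub_0_r.
    pose proof (pow_pos2 m) as Hpos.
    set (g := Z.of_nat (2^m)) in *.
    assert (Hg : 1 <= g) by (unfold g; lia).
    assert (H1 : Z.of_nat (2 ^ S m) = 2 * g) by (unfold g; change (2^S m)%nat with (2 * 2^m)%nat; lia).
    assert (H2 : Z.of_nat (2 ^ S (S m)) = 4 * g) by (unfold g; change (2^S (S m))%nat with (2 * (2 * 2^m))%nat; lia).
    assert (HL : Z.of_nat (2 ^ S m + 2 ^ m - 1) = 3 * g - 1) by (unfold g; change (2^S m)%nat with (2 * 2^m)%nat; lia).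
    assert (Hr : (2 ^ S m - 1 = S (2 ^ S m - 2))%nat) by (change (2^S m)%nat with (2 * 2^m)%nat; lia).
    assert (Hr' : Z.of_nat (2 ^ S m - 2) = 2 * g - 2) by (unfold g; change (2^S m)%nat with (2 * 2^m)%nat; lia).
    rewrite Hr. rewrite <- app_assoc.
    set (r := (2 ^ S m - 2)%nat) in *.
    set (L := (2 ^ S m + 2 ^ m - 1)%nat) in *.
    clearbody r L. cbn [repeat app].
    rewrite H1, H2. rewrite H1 in IH.
    set (fj := frog_jumps (S m)) in *.
    split.
    + intros [|d ds] HV; [contradiction|].
      cbn [V] in HV. destruct HV as [HE HV].
      destruct d; unfold step in HE, HV; change (Z.of_nat 1) with 1 in HE, HV.
      * apply walkR in HV; [| cbv beta; tauto | cbv beta; intros [[_ Hc] _]; apply Hc; ring].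
        destruct HV as [ds' [-> HV]]. rewrite Hr' in HV.
        destruct ds' as [|d2 ds2]; [contradiction|].
        cbn [V] in HV. destruct HV as [HE2 HV]. unfold step in HE2, HV. rewrite HL in HE2, HV.
        destruct d2; [cbv beta in HE2; lia|].
        replace (a + 2 * g - 1 + 1 + (2 * g - 2) - (3 * g - 1)) with (a + g - 1) in HV by ring.
        destruct (IH a) as [IHf _].
        cbn [fin]. unfold step. change (Z.of_nat 1) with 1. rewrite fin_walk. cbn [fin].
        unfold step. rewrite Hr', HL.
        replace (a + 2 * g - 1 + 1 + (2 * g - 2) - (3 * g - 1)) with (a + g - 1) by ring.
        apply IHf. eapply V_ext; [|exact HV]. intros c; cbv beta. split; intros; intuition lia.
      * apply walkL in HV; [| cbv beta; tauto | cbv beta; intros [[_ Hc] _]; apply Hc; ring].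
        destruct HV as [ds' [-> HV]]. rewrite Hr' in HV.
        destruct ds' as [|d2 ds2]; [contradiction|].
        cbn [V] in HV. destruct HV as [HE2 HV]. unfold step in HE2, HV. rewrite HL in HE2, HV.
        destruct d2; [|cbv beta in HE2; lia].
        replace (a + 2 * g - 1 - 1 - (2 * g - 2) + (3 * g - 1)) with ((a + 2*g) + g - 1) in HV by ring.
        destruct (IH (a + 2*g)) as [IHf _].
        cbn [fin]. unfold step. change (Z.of_nat 1) with 1. rewrite fin_walk. cbn [fin].
        unfold step. rewrite Hr', HL.
        replace (a + 2 * g - 1 - 1 - (2 * g - 2) + (3 * g - 1)) with ((a + 2*g) + g - 1) by ring.
        assert (He := IHf ds2). 
        match type of He with ?A -> Z.even (?F - _) = true =>
          assert (He' : Z.even (F - (a + 2*g)) = true) by (apply He; eapply V_ext; [|exact HV]; intros c; cbv beta; split; intros; intuition lia);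
          apply Z.even_spec in He'; destruct He' as [b Hb]; apply Z.even_spec; exists (b + g); lia end.
    + intros p Hp Hev.
      apply Z.even_spec in Hev. destruct Hev as [b Hb].
      destruct (Z_lt_le_dec p (2*g - 1)) as [Hlt|Hge].
      * destruct (IH a) as [_ IHe]. destruct (IHe p) as [ds2 [HV Hf]]; [lia| apply Z.even_spec; exists b; lia|].
        exists (true :: repeat true r ++ false :: ds2). split.
        -- cbn [V repeat app]. unfold step. change (Z.of_nat 1) with 1. split; [cbv beta; lia|].
           apply walkR_back. intros i Hi. rewrite Hr' in Hi. cbv beta. lia.
           rewrite Hr'. cbn [V]. unfold step. rewrite HL. split; [cbv beta; lia|].
           replace (a + 2 * g - 1 + 1 + (2 * g - 2) - (3 * g - 1)) with (a + g - 1) by ring.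
           eapply V_ext; [|exact HV]. intros c; cbv beta. split; intros; intuition lia.
        -- cbn [fin]. unfold step. change (Z.of_nat 1) with 1. rewrite fin_walk. cbn [fin].
           unfold step. rewrite Hr', HL.
           replace (a + 2 * g - 1 + 1 + (2 * g - 2) - (3 * g - 1)) with (a + g - 1) by ring.
           exact Hf.
      * destruct (IH (a + 2*g)) as [_ IHe]. destruct (IHe (p - 2*g)) as [ds2 [HV Hf]]; [lia| apply Z.even_spec; exists (b - g); lia|].
        exists (false :: repeat false r ++ true :: ds2). split.
        -- cbn [V repeat app]. unfold step. change (Z.of_nat 1) with 1. split; [cbv beta; lia|].
           apply walkL_back. intros i Hi. rewrite Hr' in Hi. cbv beta. lia.
           rewrite Hr'. cbn [V]. unfold step. rewrite HL. split; [cbv beta; lia|].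
           replace (a + 2 * g - 1 - 1 - (2 * g - 2) + (3 * g - 1)) with ((a + 2*g) + g - 1) by ring.
           eapply V_ext; [|exact HV]. intros c; cbv beta. split; intros; intuition lia.
        -- cbn [fin]. unfold step. change (Z.of_nat 1) with 1. rewrite fin_walk. cbn [fin].
           unfold step. rewrite Hr', HL.
           replace (a + 2 * g - 1 - 1 - (2 * g - 2) + (3 * g - 1)) with ((a + 2*g) + g - 1) by ring.
           rewrite Hf. ring.
Qed.

Lemma landings_length : forall J ds q, length ds = length J -> length (landings q J ds) = length J.
Proof. induction J; intros [|d ds] q H; simpl in *; auto; try discriminate. Qed.

Lemma fj_length : forall m, length (frog_jumps (S m)) = (2 ^ S m - 2)%nat.
Proof.
  induction m. reflexivity.
  rewrite fj_succ, length_app, IHm. unfold Utilde. rewrite length_app, repeat_length. simpl length.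
  simpl (S m - 1)%nat. rewrite ?Nat.sub_0_r. pose proof (pow_pos2 m).
  change (2^S (S m))%nat with (2 * (2 * 2^m))%nat. change (2^S m)%nat with (2 * 2^m)%nat. lia.
Qed.

Theorem mainTheorem7 (k : nat) (hk : (2 <= k)%nat) :
  let w := 2 ^ Z.of_nat k - 1 in
  let v := 2 ^ (Z.of_nat k - 1) in
  let noblock := fun _ : Z => False in
  (forall ds : list bool,
     valid_exec w noblock (v - 1) (frog_jumps k) ds ->
     (forall c, 0 <= c < w ->
        count_occ Z.eq_dec (visited (v - 1) (frog_jumps k) ds) c = 1%nat) /\
     Z.even (final_cell (v - 1) (frog_jumps k) ds) = true) /\
  (forall p, 0 <= p < w -> Z.even p = true ->
     exists ds : list bool,
       valid_exec w noblock (v - 1) (frog_jumps k) ds /\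
       final_cell (v - 1) (frog_jumps k) ds = p).
Proof.
  destruct k as [|m]; [lia|].
  intros w v noblock.
  assert (Hw : w = Z.of_nat (2 ^ S m) - 1) by (unfold w; rewrite Nat2Z.inj_pow; reflexivity).
  assert (Hv : v = Z.of_nat (2 ^ m)) by (unfold v; rewrite Nat2Z.inj_pow; f_equal; lia).
  pose proof (pow_pos2 m) as Hpos.
  assert (H2 : Z.of_nat (2 ^ S m) = 2 * Z.of_nat (2^m)) by (change (2^S m)%nat with (2 * 2^m)%nat; lia).
  destruct (main m 0) as [Mf Me].
  assert (Heq : forall ds, valid_exec w noblock (v - 1) (frog_jumps (S m)) ds <->
     V (fun c => 0 <= c < 0 + Z.of_nat (2^(S m)) - 1 /\ c <> 0 + Z.of_nat (2^m) - 1)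
       (0 + Z.of_nat (2^m) - 1) (frog_jumps (S m)) ds).
  { intros ds. unfold valid_exec, visited, noblock. rewrite V_char.
    replace (0 + Z.of_nat (2^m) - 1) with (v - 1) by lia.
    split.
    - intros [Hl [Hin Hnd]]. inversion Hnd; subst. split; auto. split; auto.
      intros c Hc. destruct (Hin c Hc). split; [lia|]. intros ->. auto.
    - intros [Hl [Hin Hnd]]. split; auto. split.
      + intros c Hc. destruct (Hin c Hc). split; [lia|tauto].
      + constructor; auto. intros Hc. destruct (Hin _ Hc). lia. }
  split.
  - intros ds Hval. split.
    + intros c Hc.
      set (l := visited (v - 1) (frog_jumps (S m)) ds).
      destruct Hval as [Hl [Hin Hnd]].
      set (R := map Z.of_nat (seq 0 (Z.to_nat w))).
      assert (HlR : incl l R).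
      { intros x Hx. unfold R. apply in_map_iff. exists (Z.to_nat x).
        assert (0 <= x < w).
        { destruct Hx as [<-|Hx]; [lia|]. apply Hin in Hx. tauto. }
        split; [lia|]. apply in_seq. lia. }
      assert (HRl : incl R l).
      { apply NoDup_length_incl; auto.
        unfold R, l, visited. rewrite length_map, length_seq. simpl length.
        rewrite landings_length, fj_length by auto. lia. }
      assert (Hc' : In c l).
      { apply HRl. unfold R. apply in_map_iff. exists (Z.to_nat c). split; [lia|]. apply in_seq. lia. }
      apply (count_occ_In Z.eq_dec) in Hc'.
      apply (NoDup_count_occ Z.eq_dec) with (x := c) in Hnd. fold l in Hnd. lia.
    + rewrite <- fin_final. apply Heq in Hval. apply Mf in Hval.
      replace (0 + Z.of_nat (2^m) - 1) with (v - 1) in Hval by lia. rewrite Z.sub_0_r in Hval. exact Hval.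
  - intros p Hp Hev. destruct (Me p) as [ds [HV Hf]]; [lia|auto|].
    exists ds. split. apply Heq; auto.
    rewrite <- fin_final. replace (v - 1) with (0 + Z.of_nat (2^m) - 1) by lia. rewrite Hf. ring.
Qed.
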